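(* Let $Q$ be a smooth $m$-dimensional manifold with local coordinates $(q^\lambda)$, let $Q_R=\mathbb R\times Q\to\mathbb R$ with coordinate $\tau$ on $\mathbb R$, and let $(\tau,q^\lambda,q^\lambda_\tau)$, $(\tau,q^\lambda,q^\lambda_\tau,q^\lambda_{\tau\tau})$ be the induced coordinates on the first and second order jet manifolds of sections of $Q_R\to\mathbb R$. Let $N\ge1$ be an integer, let $G_{\alpha_1\ldots\alpha_{2N}}(q^\nu)$ be the components of a symmetric tensor field on $Q$ such that $G=G_{\alpha_1\ldots\alpha_{2N}}\dot q^{\alpha_1}\cdots\dot q^{\alpha_{2N}}>0$ on $TQ$ minus its zero section, and let $A=A_\mu(q^\nu)dq^\mu$ be a one-form on $Q$ with $F_{\lambda\mu}=\partial_\lambda A_\mu-\partial_\mu A_\lambda$. Consider the Lagrangian $L=(G^{1/2N}+q^\mu_\tau A_\mu)d\tau$, $G=G_{\alpha_1\ldots\alpha_{2N}}q^{\alpha_1}_\tau\cdots q^{\alpha_{2N}}_\tau$, on the complement in $J^1Q_R$ of $\mathbb R\times(\text{zero section})$, with Euler--Lagrange expressions $\mathcal E_\lambda=\partial_\lambda\mathcal L-d_\tau\partial^\tau_\lambda\mathcal L$, and define $$E_\beta=\Big(\tfrac{1}{2N}\partial_\beta G_{\mu\alpha_2\ldots\alpha_{2N}}-\partial_\mu G_{\beta\alpha_2\ldots\alpha_{2N}}\Big)q^\mu_\tau q^{\alpha_2}_\tau\cdots q^{\alpha_{2N}}_\tau-(2N-1)G_{\beta\mu\alpha_3\ldots\alpha_{2N}}q^\mu_{\tau\tau}q^{\alpha_3}_\tau\cdots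 q^{\alpha_{2N}}_\tau+G^{1-1/2N}F_{\beta\mu}q^\mu_\tau .$$ Let $W_G$ be the submanifold of $J^1Q_R$ given by $G=1$. Then any solution of the Lagrange equations $\mathcal E_\lambda=0$ whose first jet prolongation lies in $W_G$ is a solution of the equations $E_\beta=0$.
   Context: A solution means a section $\tau\mapsto(\tau,s^\lambda(\tau))$ of $Q_R\to\mathbb R$ (with nowhere vanishing velocity) whose jet prolongations satisfy the stated equations; $d_\tau=\partial_\tau+q^\lambda_\tau\partial_\lambda+q^\lambda_{\tau\tau}\partial^\tau_\lambda+\cdots$ is the total derivative and $\partial^\tau_\lambda=\partial/\partial q^\lambda_\tau$. One has $\mathcal E_\lambda=E_\beta[\delta^\beta_\lambda-q^\beta_\tau G_{\lambda\nu_2\ldots\nu_{2N}}q^{\nu_2}_\tau\cdots q^{\nu_{2N}}_\tau G^{-1}]G^{1/2N-1}$. *)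

(* Defs.v *)
(* Everything is written in one local coordinate
   chart: Q is represented by an open set U of R^m ('rV[R]_m). *)
From HB Require Import structures.
From mathcomp Require Import all_boot all_order all_algebra.
From mathcomp Require Import all_classical all_reals all_analysis.
Set Implicit Arguments. Unset Strict Implicit. Unset Printing Implicit Defensive.
Import Order.TTheory GRing.Theory Num.Theory.
Import numFieldNormedType.Exports.
Local Open Scope classical_set_scope.
Local Open Scope ring_scope.

Definition iter_dir {R : realType} {V W : normedModType R}
  (vs : seq V) (f : V -> W) : V -> W :=
  foldr (fun v g => fun x => derive g x v) f vs.

Definition smooth_on {R : realType} {V W : normedModType R}
  (U : set V) (f : V -> W) : Prop :=
  forall (vs : seq V) (x : V), U x -> differentiable (iter_dir vs f) x.

Definition ebasis {R : realType} {m : nat} (l : 'I_m) : 'rV[R]_m :=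
  delta_mx 0 l.

Definition pd {R : realType} {m : nat} (l : 'I_m) (f : 'rV[R]_m -> R)
  (q : 'rV[R]_m) : R := derive f q (ebasis l).

(* G(q, v) = G_{a1..a2N}(q) v^{a1} ... v^{a2N}; components Gc indexed by
   lists of indices (only lists of length 2N are relevant) *)
Definition Gfull {R : realType} {m : nat} (Gc : seq 'I_m -> 'rV[R]_m -> R)
  (N : nat) (q v : 'rV[R]_m) : R :=
  \sum_(a : (N.*2).-tuple 'I_m) Gc (val a) q * \prod_(i <- val a) v 0 i.

Definition Lag {R : realType} {m : nat} (Gc : seq 'I_m -> 'rV[R]_m -> R)
  (Ac : 'I_m -> 'rV[R]_m -> R) (N : nat) (q v : 'rV[R]_m) : R :=
  powR (Gfull Gc N q v) (N.*2%:R)^-1 + \sum_(mu < m) v 0 mu * Ac mu q.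

Definition Fc {R : realType} {m : nat} (Ac : 'I_m -> 'rV[R]_m -> R)
  (l mu : 'I_m) (q : 'rV[R]_m) : R := pd l (Ac mu) q - pd mu (Ac l) q.

Definition vel {R : realType} {m : nat} (s : R -> 'rV[R]_m) (t : R) : 'rV[R]_m :=
  derive s t 1.
Definition acc {R : realType} {m : nat} (s : R -> 'rV[R]_m) (t : R) : 'rV[R]_m :=
  derive (vel s) t 1.

(* Euler-Lagrange expression  E_l = d_l L - d_tau (d^tau_l L), pulled back
   along the second jet prolongation of the section tau |-> s tau *)
Definition ELexpr {R : realType} {m : nat} (Gc : seq 'I_m -> 'rV[R]_m -> R)
  (Ac : 'I_m -> 'rV[R]_m -> R) (N : nat) (s : R -> 'rV[R]_m) (l : 'I_m)
  (t : R) : R :=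
  pd l (fun q => Lag Gc Ac N q (vel s t)) (s t)
  - derive (fun t' => pd l (Lag Gc Ac N (s t')) (vel s t')) t 1.

Definition Eexpr {R : realType} {m : nat} (Gc : seq 'I_m -> 'rV[R]_m -> R)
  (Ac : 'I_m -> 'rV[R]_m -> R) (N : nat) (b : 'I_m) (q v w : 'rV[R]_m) : R :=
  \sum_(mu < m) \sum_(a : (N.*2 - 1).-tuple 'I_m)
     ((N.*2%:R)^-1 * pd b (Gc (mu :: val a)) q - pd mu (Gc (b :: val a)) q)
       * v 0 mu * \prod_(i <- val a) v 0 i
  - (N.*2%:R - 1) * \sum_(mu < m) \sum_(a : (N.*2 - 2).-tuple 'I_m)
       Gc (b :: mu :: val a) q * w 0 mu * \prod_(i <- val a) v 0 i
  + powR (Gfull Gc N q v) (1 - (N.*2%:R)^-1) * \sum_(mu < m) Fc Ac b mu q * v 0 mu.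

(* Main.v *)
Require Import Defs.
From HB Require Import structures.
From mathcomp Require Import all_boot all_order all_algebra.
From mathcomp Require Import all_classical all_reals all_analysis.
From mathcomp Require Import ring lra.
Import Order.TTheory GRing.Theory Num.Theory.
Import numFieldNormedType.Exports.
Local Open Scope classical_set_scope.
Local Open Scope ring_scope.

Section H.
Variable R : realType.

Lemma isdD (f g : R -> R) (x df dg : R) : is_derive x 1 f df -> is_derive x 1 g dg ->
  is_derive x 1 (fun y => f y + g y) (df + dg).
Proof. by move=> H1 H2; have := is_deriveD H1 H2. Qed.

Lemma isdM (f g : R -> R) (x df dg : R) : is_derive x 1 f df -> is_derive x 1 g dg ->
  is_derive x 1 (fun y => f y * g y) (f x * dg + g x * df).
Proof. by move=> H1 H2; have := is_deriveM H1 H2. Qed.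

Lemma isdC (c x : R) : is_derive x 1 (fun _ : R => c) 0.
Proof. exact: is_derive_cst. Qed.

Lemma isdid (x : R) : is_derive x 1 (fun y : R => y) 1.
Proof. exact: is_derive_id. Qed.

Lemma isd_sum (I : finType) (h : I -> R -> R) (x : R) (dh : I -> R) :
  (forall i, is_derive x 1 (h i) (dh i)) ->
  is_derive x 1 (fun y => \sum_(i : I) h i y) (\sum_(i : I) dh i).
Proof.
move=> H; rewrite /index_enum; elim: (Finite.enum I) => [|i s IH].
  rewrite big_nil; under eq_fun do rewrite big_nil; exact: isdC.
rewrite big_cons; under eq_fun do rewrite big_cons.
exact: isdD.
Qed.

Lemma der_prod (T : Type) (s : seq T) (g : T -> R -> R) (x : R) :
  (forall i, derivable (g i) x 1) ->
  derivable (fun y => \prod_(i <- s) g i y) x 1.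
Proof.
move=> H; elim: s => [|i s IH].
  under eq_fun do rewrite big_nil; exact: derivable_cst.
under eq_fun do rewrite big_cons.
have := derivableM (H i) IH; exact.
Qed.

Variable m : nat.

Lemma sum_tuple_cons k (F : seq 'I_m -> R) :
  \sum_(a : k.+1.-tuple 'I_m) F (val a) =
  \sum_(mu < m) \sum_(a : k.-tuple 'I_m) F (mu :: val a).
Proof.
rewrite pair_big /=.
rewrite (reindex (fun a : k.+1.-tuple 'I_m => (thead a, behead_tuple a))) /=.
  by apply: eq_bigr => a _; rewrite [in LHS](tuple_eta a).
exists (fun p => cons_tuple p.1 p.2) => [a _|[mu a] _] /=.
  by apply: val_inj; rewrite /= [in RHS](tuple_eta a).
by rewrite theadE; congr pair; apply: val_inj.
Qed.

Definition P k (C : seq 'I_m -> R) (g : 'I_m -> R) :=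
  \sum_(a : k.-tuple 'I_m) C (val a) * \prod_(i <- val a) g i.

Definition Sym k (C : seq 'I_m -> R) :=
  forall a b, size a = k -> perm_eq a b -> C a = C b.

Lemma P_cons k C g : P k.+1 C g = \sum_(mu < m) g mu * P k (fun a => C (mu :: a)) g.
Proof.
rewrite /P (sum_tuple_cons _ (fun a => C a * \prod_(i <- a) g i)); apply: eq_bigr => mu _; rewrite mulr_sumr.
by apply: eq_bigr => a _; rewrite big_cons mulrCA.
Qed.

Lemma eq_P k C1 C2 g : (forall a, size a = k -> C1 a = C2 a) -> P k C1 g = P k C2 g.
Proof. by move=> H; apply: eq_bigr => a _; rewrite H // size_tuple. Qed.

Lemma P_deriv k : forall C (g : 'I_m -> R -> R) (g' : 'I_m -> R) (x : R), Sym k C ->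
  (forall i, is_derive x 1 (g i) (g' i)) ->
  is_derive x 1 (fun y => P k C (fun i => g i y))
    (k%:R * \sum_(mu < m) g' mu * P k.-1 (fun a => C (mu :: a)) (fun i => g i x)).
Proof.
elim: k => [|k IH] C g g' x HS Hg.
  have -> : (fun y => P 0 C (fun i => g i y)) = fun _ => P 0 C (fun i => g i x).
    apply/funext => y; apply: eq_bigr => a _; by rewrite (tuple0 a) /= !big_nil.
  by rewrite mul0r; exact: isdC.
have -> : (fun y => P k.+1 C (fun i => g i y)) =
  fun y => \sum_(mu < m) g mu y * P k (fun a => C (mu :: a)) (fun i => g i y).
  by apply/funext => y; rewrite P_cons.
apply: is_derive_eq.
  apply: isd_sum => mu; apply: isdM.
  apply: IH => // a b Ha Hab; apply: HS; first by rewrite /= Ha.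
  by rewrite perm_cons.
rewrite big_split /= -addrC.
under [X in _ + X]eq_bigr do rewrite mulrCA.
rewrite -[X in _ + X]mulr_sumr.
case: k IH HS => [|k] IH HS.
  by rewrite mul0r addr0 mul1r; apply: eq_bigr => mu _; rewrite mulrC.
rewrite [in RHS]mulrSr mulrDl mul1r addrC; congr (_ + _); last first.
  by apply: eq_bigr => mu _; rewrite mulrC.
congr (_ * _).
transitivity (\sum_(i < m) \sum_(mu < m) g i x * (g' mu * P k (fun a => C [:: i, mu & a]) (g^~ x))).
  by apply: eq_bigr => i _; rewrite mulr_sumr.
rewrite exchange_big /=; apply: eq_bigr => nu _.
under eq_bigr do rewrite mulrCA.
rewrite -mulr_sumr; congr (_ * _).
rewrite [in RHS]P_cons; apply: eq_bigr => mu _; congr (_ * _).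
apply: eq_P => a Ha /=; apply: HS; first by rewrite /= Ha.
by apply/permP => p /=; rewrite addnCA.
Qed.


Lemma deriveP1 (F : 'rV[R]_m -> R) a e :
  derive F a e = derive (fun h : R => F (h *: e + a)) 0 1.
Proof.
rewrite /derive; set g1 := fun h => h^-1 *: _; set g2 := fun h => h^-1 *: _.
suff -> : g1 = g2 by [].
by rewrite funeqE /g1 /g2 => h /=; rewrite addr0 scale0r add0r [_%:A]mulr1.
Qed.

Lemma pd1 (F : 'rV[R]_m -> R) a e (d : R) :
  is_derive (0:R) 1 (fun h : R => F (h *: e + a)) d -> derive F a e = d.
Proof. by move=> H; rewrite deriveP1 derive_val. Qed.

Lemma diff_isd1 (F : 'rV[R]_m -> R) a e : differentiable F a ->
  is_derive (0:R) 1 (fun h : R => F (h *: e + a)) (derive F a e).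
Proof.
move=> dF; split; first exact: ((derivable1P F a e).1 (diff_derivable dF)).
by rewrite -deriveP1.
Qed.

Lemma chain (f : 'rV[R]_m -> R) (s : R -> 'rV[R]_m) (t : R) :
  differentiable s t -> differentiable f (s t) ->
  is_derive t 1 (fun x => f (s x))
    (\sum_(mu < m) derive s t 1 0 mu * derive f (s t) (ebasis mu)).
Proof.
move=> ds df; have dc := differentiable_comp ds df.
apply: DeriveDef; first exact: diff_derivable.
rewrite (deriveE _ dc) diff_comp //= -(deriveE _ ds).
rewrite [X in 'd f (s t) X]row_sum_delta linear_sum; apply: eq_bigr => mu _.
by rewrite linearZ /= -deriveE.
Qed.


Lemma isd_powR (f : R -> R) (x df c : R) : is_derive x 1 f df -> 0 < f x ->
  is_derive x 1 (fun y => powR (f y) c) (c * (f x) `^ (c - 1) * df).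
Proof.
move=> Hf fx0.
have ip := @is_derive1_powR R c (f x) fx0.
have dpf : derivable (fun y : R => powR y c) (f x) 1 by apply: ex_derive.
have df1 : derivable f x 1 by apply: ex_derive.
split.
  apply/derivable1_diffP; apply: (@differentiable_comp _ _ _ _ f (fun y : R => powR y c)); by apply/derivable1_diffP.
have := derive1_comp df1 dpf; rewrite !derive1E => ->.
by rewrite (@derive_val _ _ _ _ _ _ _ ip) derive_val.
Qed.

Lemma isd_comp (M : R -> 'rV[R]_m) (t : R) i : derivable M t 1 ->
  is_derive t 1 (fun x => M x 0 i) (derive M t 1 0 i).
Proof.
move=> dM; split; first by move/derivable_mxP: dM; apply.
by rewrite derive_mx // mxE.
Qed.


Lemma lin_isd (c d x : R) : is_derive x 1 (fun h : R => h * c + d) c.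
Proof.
apply: is_derive_eq.
by rewrite scaler0 add0r addr0 [_%:A]mulr1.
Qed.

Lemma sum_ebasis (l : 'I_m) (X : 'I_m -> R) :
  \sum_(mu < m) (ebasis l : 'rV[R]_m) 0 mu * X mu = X l.
Proof.
rewrite (bigD1 l) //= big1 ?addr0; first by rewrite /ebasis mxE !eqxx mul1r.
by move=> mu /negbTE Hmu; rewrite /ebasis mxE Hmu andbF mul0r.
Qed.

Lemma GfullP (Gc : seq 'I_m -> 'rV[R]_m -> R) N q v :
  Gfull Gc N q v = P (N.*2) (fun a => Gc a q) (fun i => v 0 i).
Proof. by []. Qed.

Lemma X2_eq (Gc : seq 'I_m -> 'rV[R]_m -> R) (Ac : 'I_m -> 'rV[R]_m -> R) N'
  (Gsym : forall a b : seq 'I_m, size a = N'.+1.*2 -> perm_eq a b -> Gc a = Gc b)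
  q v l : Gfull Gc N'.+1 q v = 1 ->
  pd l (Lag Gc Ac N'.+1 q) v = P (N'.*2.+1) (fun a => Gc (l::a) q) (fun i => v 0 i) + Ac l q.
Proof.
move=> G1; apply: pd1; rewrite /Lag.
under eq_fun do rewrite GfullP.
have Hg : forall i, is_derive (0:R) 1 (fun h : R => (h *: ebasis l + v) 0 i) ((ebasis l : 'rV[R]_m) 0 i).
  move=> i; under eq_fun do rewrite !mxE.
  have := lin_isd ((ebasis l : 'rV[R]_m) 0 i) (v 0 i) 0.
  by rewrite /ebasis !mxE.
have HS : Sym N'.+1.*2 (fun a => Gc a q).
  by move=> a b Ha Hab; rewrite (Gsym a b Ha Hab).
have HP := P_deriv _ _ _ _ _ HS Hg.
have E0 : (0 *: ebasis l + v) = v by rewrite scale0r add0r.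
apply: is_derive_eq.
  apply: isdD; last first.
    apply: isd_sum => mu; apply: isdM.
  apply: isd_powR.
  by rewrite /= E0; change (0 < Gfull Gc N'.+1 q v); rewrite G1.
rewrite /= E0; change (P N'.+1.*2 (Gc^~ q) [eta v 0]) with (Gfull Gc N'.+1 q v).
rewrite G1 powR1 mulr1.
rewrite [X in _ + X](eq_bigr (fun i => (ebasis l : 'rV[R]_m) 0 i * Ac i q)); last first.
  move=> i _; change (v 0 i * 0 + Ac i q * (ebasis l : 'rV[R]_m) 0 i = (ebasis l : 'rV[R]_m) 0 i * Ac i q).
  by rewrite mulr0 add0r mulrC.
rewrite sum_ebasis sum_ebasis; congr (_ + _).
by rewrite mulrA mulVf ?mul1r.
Qed.


Lemma X1_eq (Gc : seq 'I_m -> 'rV[R]_m -> R) (Ac : 'I_m -> 'rV[R]_m -> R) N' q v l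
  (dG : forall a, size a = N'.+1.*2 -> differentiable (Gc a) q)
  (dA : forall mu, differentiable (Ac mu) q) : Gfull Gc N'.+1 q v = 1 ->
  pd l (fun q' => Lag Gc Ac N'.+1 q' v) q =
  (N'.+1.*2%:R)^-1 * P N'.+1.*2 (fun a => pd l (Gc a) q) (fun i => v 0 i)
  + \sum_(mu < m) v 0 mu * pd l (Ac mu) q.
Proof.
move=> G1; apply: pd1; rewrite /Lag.
under eq_fun do rewrite GfullP.
have E0 : (0 *: ebasis l + q) = q by rewrite scale0r add0r.
have HG : forall a : N'.+1.*2.-tuple 'I_m,
  is_derive (0:R) 1 (fun h : R => Gc (val a) (h *: ebasis l + q)) (pd l (Gc (val a)) q).
  by move=> a; apply: diff_isd1; apply: dG; rewrite size_tuple.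
have HA : forall mu,
  is_derive (0:R) 1 (fun h : R => Ac mu (h *: ebasis l + q)) (pd l (Ac mu) q).
  by move=> mu; apply: diff_isd1.
apply: is_derive_eq.
  apply: isdD.
    apply: isd_powR.
      rewrite /P; apply: isd_sum => a; apply: isdM; try exact: HG; try exact: isdC.
    by rewrite /= E0; change (0 < Gfull Gc N'.+1 q v); rewrite G1.
  apply: isd_sum => mu; apply: isdM; try exact: HA; try exact: isdC.
rewrite /= E0; change (P N'.+1.*2 (Gc^~ q) [eta v 0]) with (Gfull Gc N'.+1 q v).
rewrite G1 powR1 mulr1; congr (_ * _ + _).
apply: eq_bigr => a _.
change (Gc (val a) q * 0 + (\prod_(i1 <- val a) v 0 i1) * pd l (Gc (val a)) q =
  pd l (Gc (val a)) q * \prod_(i1 <- val a) v 0 i1).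
by rewrite mulr0 add0r mulrC.
Qed.


Lemma H_deriv (Gc : seq 'I_m -> 'rV[R]_m -> R) (Ac : 'I_m -> 'rV[R]_m -> R) N'
  (Gsym : forall a b : seq 'I_m, size a = N'.+1.*2 -> perm_eq a b -> Gc a = Gc b)
  (s : R -> 'rV[R]_m) (t : R) (l : 'I_m)
  (ds : differentiable s t) (dv : derivable (vel s) t 1)
  (dG : forall a, size a = N'.+1.*2 -> differentiable (Gc a) (s t))
  (dA : forall mu, differentiable (Ac mu) (s t)) :
  is_derive t 1 (fun t' => P N'.*2.+1 (fun a => Gc (l::a) (s t')) (fun i => vel s t' 0 i)
                             + Ac l (s t'))
   ((N'.*2.+1)%:R * \sum_(mu < m) acc s t 0 mu *
        P N'.*2 (fun a => Gc (l::mu::a) (s t)) (fun i => vel s t 0 i)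
    + \sum_(a : N'.*2.+1.-tuple 'I_m) (\prod_(i <- val a) vel s t 0 i) *
        \sum_(mu < m) vel s t 0 mu * pd mu (Gc (l :: val a)) (s t)
    + \sum_(mu < m) vel s t 0 mu * pd mu (Ac l) (s t)).
Proof.
have Hvel : forall i, is_derive t 1 (fun x => vel s x 0 i) (acc s t 0 i).
  by move=> i; apply: isd_comp.
have HS : Sym N'.*2.+1 (fun a => Gc (l :: a) (s t)).
  by move=> a b Ha Hab; rewrite (Gsym (l :: a) (l :: b)) //= ?Ha // perm_cons.
have HP := P_deriv _ _ _ _ _ HS Hvel.
have Hp : forall a : N'.*2.+1.-tuple 'I_m, is_derive t 1
    (fun x => \prod_(i <- val a) vel s x 0 i)
    (derive (fun x => \prod_(i <- val a) vel s x 0 i) t 1).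
  move=> a; apply: derivableP; apply: der_prod => i.
  by have [] := Hvel i.
have HS2 := isd_sum _ _ _ _ (fun a => isdM _ _ _ _ _ (isdC (Gc (l :: val a) (s t)) t) (Hp a)).
have E := etrans (esym (@derive_val _ _ _ _ _ _ _ HP)) (@derive_val _ _ _ _ _ _ _ HS2).
have HC : forall a : N'.*2.+1.-tuple 'I_m, is_derive t 1 (fun x => Gc (l :: val a) (s x))
   (\sum_(mu < m) vel s t 0 mu * pd mu (Gc (l :: val a)) (s t)).
  move=> a; apply: chain => //; apply: dG; by rewrite /= size_tuple.
have HA : is_derive t 1 (fun x => Ac l (s x))
   (\sum_(mu < m) vel s t 0 mu * pd mu (Ac l) (s t)).
  exact: chain.
apply: is_derive_eq.
  exact: (isdD _ _ _ _ _ (isd_sum _ _ _ _ (fun a => isdM _ _ _ _ _ (HC a) (Hp a))) HA).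
congr (_ + _); rewrite big_split /= E; congr (_ + _).
by apply: eq_bigr => a _; rewrite mulr0 addr0.
Qed.

Lemma sum_tuple_eq k1 k2 (F : seq 'I_m -> R) : k1 = k2 ->
  \sum_(a : k1.-tuple 'I_m) F (val a) = \sum_(a : k2.-tuple 'I_m) F (val a).
Proof. by move=> ->. Qed.

End H.
Arguments P {R m}.

Theorem lemma5p4 (R : realType) (m N : nat) (HN : (1 <= N)%N)
  (U : set 'rV[R]_m) (hU : open U)
  (Gc : seq 'I_m -> 'rV[R]_m -> R) (Ac : 'I_m -> 'rV[R]_m -> R)
  (Gsmooth : forall a : seq 'I_m, size a = N.*2 -> smooth_on U (Gc a))
  (Gsym : forall a b : seq 'I_m, size a = N.*2 -> perm_eq a b -> Gc a = Gc b)
  (Gpos : forall q v : 'rV[R]_m, U q -> v != 0 -> 0 < Gfull Gc N q v)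
  (Asmooth : forall mu : 'I_m, smooth_on U (Ac mu))
  (s : R -> 'rV[R]_m) (s_smooth : smooth_on setT s)
  (sU : forall t, U (s t)) (s_reg : forall t, vel s t != 0)
  (EL : forall (l : 'I_m) (t : R), ELexpr Gc Ac N s l t = 0)
  (WG : forall t, Gfull Gc N (s t) (vel s t) = 1) :
  forall (b : 'I_m) (t : R), Eexpr Gc Ac N b (s t) (vel s t) (acc s t) = 0.
Proof.
move=> b t.
case: N HN Gsmooth Gsym Gpos EL WG => [//|N'] _ Gsmooth Gsym Gpos EL WG.
have ds : forall t, differentiable s t := fun t => s_smooth [::] t I.
have dv : forall t, derivable (vel s) t 1 := fun t => diff_derivable (s_smooth [:: 1] t I).
have dG : forall t a, size a = N'.+1.*2 -> differentiable (Gc a) (s t).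
  by move=> t' a Ha; exact: (Gsmooth a Ha [::] (s t') (sU t')).
have dA : forall t mu, differentiable (Ac mu) (s t).
  by move=> t' mu; exact: (Asmooth mu [::] (s t') (sU t')).
have EL0 := EL b t; rewrite /ELexpr in EL0.
rewrite (X1_eq _ _ _ _ _ _ _ _ (dG t) (dA t) (WG t)) in EL0.
have Hfun : (fun t' => pd b (Lag Gc Ac N'.+1 (s t')) (vel s t')) =
   fun t' => P N'.*2.+1 (fun a => Gc (b::a) (s t')) (fun i => vel s t' 0 i) + Ac b (s t').
  by apply/funext => t'; rewrite (X2_eq _ _ _ _ _ Gsym _ _ _ (WG t')).
rewrite Hfun (@derive_val _ _ _ _ _ _ _ (H_deriv _ _ _ _ _ Gsym _ _ b (ds t) (dv t) (dG t) (dA t))) in EL0.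
rewrite -EL0 /Eexpr WG powR1 mul1r.
set c := N'.+1.*2%:R^-1.
set q := s t. set v := vel s t. set w := acc s t.
have A1 : \sum_(mu < m) \sum_(a : (N'.+1.*2 - 1).-tuple 'I_m)
        (c * pd b (Gc (mu :: \val a)) q - pd mu (Gc (b :: \val a)) q) *
        v 0 mu * \prod_(i <- \val a) v 0 i =
   c * P N'.+1.*2 (fun a : seq 'I_m => pd b (Gc a) q) (fun i => v 0 i) -
   \sum_(a : N'.*2.+1.-tuple 'I_m) \prod_(i <- \val a) v 0 i *
      \sum_(mu < m) v 0 mu * pd mu (Gc (b :: \val a)) q.
  rewrite (P_cons _ _ N'.*2.+1).
  rewrite (eq_bigr (fun mu => \sum_(a : N'.*2.+1.-tuple 'I_m)
       (c * pd b (Gc (mu :: \val a)) q * v 0 mu * \prod_(i <- \val a) v 0 i) -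
       \sum_(a : N'.*2.+1.-tuple 'I_m) (pd mu (Gc (b :: \val a)) q * v 0 mu * \prod_(i <- \val a) v 0 i))); last first.
    by move=> mu _; rewrite -sumrB; apply: eq_bigr => a _; ring.
  rewrite sumrB; congr (_ - _).
    rewrite mulr_sumr; apply: eq_bigr => mu _; rewrite /P !mulr_sumr.
    by apply: eq_bigr => a _; ring.
  rewrite exchange_big /=; apply: eq_bigr => a _; rewrite mulr_sumr.
  by apply: eq_bigr => mu _; ring.
have A2 : (N'.+1.*2%:R - 1) * \sum_(mu < m) \sum_(a : (N'.+1.*2 - 2).-tuple 'I_m)
        Gc [:: b, mu & \val a] q * w 0 mu * \prod_(i <- \val a) v 0 i =
   N'.*2.+1%:R * \sum_(mu < m) w 0 mu * P N'.*2 (fun a => Gc [:: b, mu & a] q) (fun i => v 0 i).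
  congr (_ * _).
    by change ((N'.*2.+2)%:R - 1 = N'.*2.+1%:R :> R); rewrite mulrS addrC addrK.
  have E2 : (N'.+1.*2 - 2 = N'.*2)%N by rewrite doubleS !subSS subn0.
  apply: eq_bigr => mu _; rewrite /P mulr_sumr.
  rewrite (sum_tuple_eq _ _ _ _ (fun a => Gc [:: b, mu & a] q * w 0 mu * \prod_(i <- a) v 0 i) E2).
  by apply: eq_bigr => a _; ring.
have A3 : \sum_(mu < m) Fc Ac b mu q * v 0 mu =
   \sum_(mu < m) v 0 mu * pd b (Ac mu) q - \sum_(mu < m) v 0 mu * pd mu (Ac b) q.
  by rewrite -sumrB; apply: eq_bigr => mu _; rewrite /Fc; ring.
rewrite A1 A2 A3.
ring.
Qed.
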